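(* Let $b\ge 2$ with $b\not\equiv 1\pmod 3$, and let $n\ge 2$. Then $$\mathrm{Ap}(T_{b'}(n),s'_0)=\Big\{\sum_{i=1}^{n+1} t_i s'_i : (t_1,\dots,t_{n+1})\in R_{b'}(n)\Big\}.$$
   Context: For integers $b\ge2$ with $b\not\equiv1\pmod3$, $n\ge0$, $i\ge0$ put $s'_i=(b+1)b^{n+i}+1$, and $T_{b'}(n)=\langle\{s'_i:i\in\mathbb{N}\}\rangle$ (submonoid of $(\mathbb{N},+)$ generated by them). For a numerical semigroup $S$ and $x\in S\setminus\{0\}$, $\mathrm{Ap}(S,x)=\{s\in S:s-x\notin S\}$. $R_{b'}(n)$ is the set of $(t_1,\dots,t_{n+1})\in\{0,1,\dots,b\}^{n+1}$ such that: (i) if $t_i=b$ then $t_j=0$ for all $1\le j<i$; (ii) $t_{n+1}\le b-1$; (iii) if $t_{n+1}=b-1$ then $t_n\le b-1$, and if $(t_n,t_{n+1})=(b-1,b-1)$ then $t_1\le 2$ and $t_i=0$ for all $i\notin\{1,n,n+1\}$. *)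

(* Defs.v *)
From mathcomp Require Import all_boot.
Set Implicit Arguments. Unset Strict Implicit. Unset Printing Implicit Defensive.

Definition sgen (b n i : nat) : nat := (b + 1) * b ^ (n + i) + 1.

Definition inT (b n x : nat) : Prop :=
  exists (N : nat) (a : nat -> nat), x = \sum_(i < N) a i * sgen b n i.

(* Apery set membership: s in S and s - x notin S (integer subtraction). *)
Definition inApery (S : nat -> Prop) (x s : nat) : Prop :=
  S s /\ ~ (x <= s /\ S (s - x)).

(* R_{b'}(n): tuples (t_1,...,t_{n+1}) encoded by t : nat -> nat,
   only the values at indices 1..n+1 matter. *)
Definition inR (b n : nat) (t : nat -> nat) : Prop :=
  (forall i, 1 <= i <= n.+1 -> t i <= b) /\
  (forall i, 1 <= i <= n.+1 -> t i = b -> forall j, 1 <= j < i -> t j = 0) /\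
  t n.+1 <= b - 1 /\
  (t n.+1 = b - 1 -> t n <= b - 1) /\
  (t n = b - 1 -> t n.+1 = b - 1 ->
     t 1 <= 2 /\ (forall i, 1 <= i <= n.+1 -> i != 1 -> i != n -> i != n.+1 -> t i = 0)).

(* Main.v *)
Require Import Defs.
From mathcomp Require Import all_boot zify.
Set Implicit Arguments. Unset Strict Implicit. Unset Printing Implicit Defensive.

Fixpoint w (b i : nat) : nat := if i is i'.+1 then b * w b i' + 1 else 0.
Definition sumw b (u : seq nat) := sumn (map (w b) u).

Lemma wS b i : w b i.+1 = b * w b i + 1. Proof. by []. Qed.

Lemma w_pow b i : 0 < b -> (b - 1) * w b i + 1 = b ^ i.
Proof. move=> hb; elim: i => [|i IH]; first by rewrite expn0 muln0.
rewrite wS expnS -IH; nia. Qed.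

Lemma w_leq b i j : 0 < b -> i <= j -> w b i <= w b j.
Proof.
move=> hb; elim: j => [|j IH]; first by rewrite leqn0 => /eqP->.
rewrite leq_eqVlt => /orP[/eqP->//| ]; rewrite ltnS => /IH h.
apply: leq_trans h _; rewrite wS; nia.
Qed.

Lemma w_gt0 b i : 0 < b -> 0 < i -> 0 < w b i.
Proof. by case: i => // i hb _; rewrite wS; lia. Qed.

Lemma w_lt_inv b i j : 0 < b -> w b i < w b j -> i < j.
Proof. move=> hb h; rewrite ltnNge; apply/negP => /(w_leq hb) h2; lia. Qed.

Lemma sumw_cons b x u : sumw b (x :: u) = w b x + sumw b u. Proof. by []. Qed.
Lemma sumw_cat b u v : sumw b (u ++ v) = sumw b u + sumw b v.
Proof. by rewrite /sumw map_cat sumn_cat. Qed.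
Lemma sumw_nseq b c x : sumw b (nseq c x) = c * w b x.
Proof. elim: c => [|c IH] //; rewrite [nseq _ _]/= sumw_cons IH; lia. Qed.
Lemma sumw_rem b x u : x \in u -> sumw b u = w b x + sumw b (rem x u).
Proof.
elim: u => [|y u IH] //=; rewrite in_cons; case: eqVneq => [->|hne] /= h.
  by rewrite /sumw /=.
by rewrite /sumw /= -/(sumw b u) -/(sumw b (rem x u)) (IH h); lia.
Qed.
Lemma sumw_pos b u : 0 < sumw b u -> exists2 j, j \in u & 0 < j.
Proof.
elim: u => [|y u IH]; first by [].
case: y => [|y].
  rewrite sumw_cons /= => /IH [j hj hj0]; exists j => //; by rewrite in_cons hj orbT.
move=> H.
exists y.+1; last by []. by rewrite in_cons eqxx.
Qed.
Lemma sumw_mem b x u : x \in u -> w b x <= sumw b u.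
Proof. by move=> /(sumw_rem b) ->; lia. Qed.
Lemma sumw_split b M r :
  sumw b r = count_mem M r * w b M + sumw b (filter (predC1 M) r) /\
  size r = count_mem M r + size (filter (predC1 M) r).
Proof.
elim: r => [|y r [IH1 IH2]] //=; case: eqVneq => [->|hne] /=;
rewrite !sumw_cons IH1 IH2 ?eqxx; try (rewrite (negbTE hne)); rewrite ?eqxx /=; lia.
Qed.
Lemma sumw_all1 b r : all (fun j => j < 1) r -> sumw b r = 0.
Proof. elim: r => [|[|y] r IH] //= /andP[_ h]; rewrite sumw_cons IH //. Qed.


Lemma C_lem b : 0 < b -> forall m, 0 < m -> forall r, all (fun j => j < m) r -> w b m <= sumw b r ->
  exists r', [/\ all (fun j => j < m) r', sumw b r' + w b m = sumw b r & size r' < size r].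
Proof.
move=> hb [//|k] _; elim: k => [|k IH] r hr hw.
  by move: hw; rewrite (sumw_all1 b hr) /= muln0.
move: (k.+1) (ltn0Sn k) IH hr hw => M hM IH hr hw.
have Hbig : forall c r0, b <= c -> all (fun j => j < M) r0 -> w b M.+1 <= c * w b M + sumw b r0 ->
  exists r', [/\ all (fun j => j < M.+1) r', sumw b r' + w b M.+1 = c * w b M + sumw b r0
          & size r' < c + size r0].
  move=> c r0 hc h0 hs.
  have [c' Ec] : exists c', c = b + c' by exists (c - b); rewrite subnKC.
  subst c.
  move Hrest: (nseq c' M ++ r0) => rest.
  have hrest : sumw b rest = c' * w b M + sumw b r0 by rewrite -Hrest sumw_cat sumw_nseq.
  have hsr : size rest = c' + size r0 by rewrite -Hrest size_cat size_nseq.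
  have : 0 < sumw b rest by rewrite hrest; move: hs; rewrite wS; lia.
  move=> /sumw_pos [j hj hj0].
  have hjM : j < M.+1.
    move: hj; rewrite -Hrest mem_cat => /orP[|h].
      by rewrite mem_nseq => /andP[_ /eqP->].
    by move/allP: h0 => /(_ j h); lia.
  exists (nseq b j.-1 ++ rem j rest); split.
  - rewrite all_cat all_nseq; apply/andP; split; first by apply/orP; right; lia.
    apply/allP => x /mem_rem; rewrite -Hrest mem_cat => /orP[|h].
      by rewrite mem_nseq => /andP[_ /eqP->].
    by move/allP: h0 => /(_ x h); lia.
  - rewrite sumw_cat sumw_nseq.
    have := sumw_rem b hj; rewrite hrest.
    case: j hj0 {hj hjM} => // j _ /=; lia.
  - rewrite size_cat size_nseq size_rem // hsr.
    have : 0 < size rest by case: (rest) hj.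
    rewrite hsr; lia.
have Hgen : forall d c r0, b - c <= d -> all (fun j => j < M) r0 -> w b M.+1 <= c * w b M + sumw b r0 ->
  exists r', [/\ all (fun j => j < M.+1) r', sumw b r' + w b M.+1 = c * w b M + sumw b r0
          & size r' < c + size r0].
  elim=> [|d IHd] c r0 hd h0 hs.
    by apply: Hbig => //; lia.
  case: (leqP b c) => hbc; first by apply: Hbig.
  have : w b M <= sumw b r0 by move: hs; rewrite wS; nia.
  case/(IH r0 h0) => r0' [h0' hs' hz'].
  have [r' [h1 h2 h3]] := IHd c.+1 r0' ltac:(lia) h0' ltac:(nia).
  exists r'; split => //; lia.
have [hs1 hs2] := sumw_split b M r.
have := Hgen b (count_mem M r) (filter (predC1 M) r) ltac:(lia).
case.
- apply/allP => x; rewrite mem_filter => /andP[/= hx hxr].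
  by move/allP: hr => /(_ x hxr); lia.
- by rewrite -hs1.
move=> r' [h1 h2 h3]; exists r'; split => //.
  by rewrite h2 hs1.
by rewrite hs2.
Qed.


Definition skew b k (t : nat -> nat) :=
  (forall i, 1 <= i <= k -> t i <= b) /\
  (forall i, 1 <= i <= k -> t i = b -> forall j, 1 <= j < i -> t j = 0).
Definition Nt b k (t : nat -> nat) := \sum_(1 <= i < k.+1) t i * w b i.
Definition Tt k (t : nat -> nat) := \sum_(1 <= i < k.+1) t i.

Lemma NtS b k t : Nt b k.+1 t = Nt b k t + t k.+1 * w b k.+1.
Proof. by rewrite /Nt big_nat_recr. Qed.
Lemma TtS k t : Tt k.+1 t = Tt k t + t k.+1.
Proof. by rewrite /Tt big_nat_recr. Qed.
Lemma Nt0 b t : Nt b 0 t = 0. Proof. by rewrite /Nt big_geq. Qed.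
Lemma Tt0 t : Tt 0 t = 0. Proof. by rewrite /Tt big_geq. Qed.

Lemma Nt_eq b k t t' : (forall i, 1 <= i <= k -> t i = t' i) -> Nt b k t = Nt b k t'.
Proof. by move=> h; apply: eq_big_nat => i hi; rewrite h //; lia. Qed.
Lemma Tt_eq k t t' : (forall i, 1 <= i <= k -> t i = t' i) -> Tt k t = Tt k t'.
Proof. by move=> h; apply: eq_big_nat => i hi; rewrite h //; lia. Qed.

Lemma Nt_zero b k t : (forall i, 1 <= i <= k -> t i = 0) -> Nt b k t = 0.
Proof. move=> h; rewrite (@Nt_eq _ _ _ (fun=> 0)) // /Nt big1 //. Qed.

Lemma skew_le b k t : skew b k.+1 t -> skew b k t.
Proof.
case=> h1 h2; split => [i hi|i hi hb j hj]; first by apply: h1; lia.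
by apply: (h2 i) => //; lia.
Qed.

Lemma TtN b k t : 0 < b -> Tt k t <= Nt b k t.
Proof.
move=> hb; elim: k => [|k IH]; first by rewrite Tt0.
rewrite TtS NtS; have := w_gt0 hb (ltn0Sn k); nia.
Qed.

Lemma skew_bound b k t : 0 < b -> skew b k t -> Nt b k t < w b k.+1.
Proof.
move=> hb; elim: k t => [|k IH] t hs; first by rewrite Nt0 wS; lia.
rewrite NtS [w b k.+2]wS.
have hk := IH t (skew_le hs).
case: hs => h1 h2.
have htk : t k.+1 <= b by apply: h1; lia.
case: (eqVneq (t k.+1) b) => [hE|hN].
  rewrite Nt_zero; first by rewrite hE; lia.
  move=> i hi; apply: (h2 k.+1) => //; lia.
have : t k.+1 <= b - 1 by lia.
move=> /(leq_mul (leqnn (w b k.+1))); nia.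
Qed.

Lemma skew_exists b k N : 0 < b -> N < w b k.+1 -> exists t, skew b k t /\ Nt b k t = N.
Proof.
move=> hb; elim: k N => [|k IH] N hN.
  exists (fun=> 0); split; last by rewrite Nt0; move: hN => /=; lia.
  by split => // i; lia.
case: (eqVneq N (b * w b k.+1)) => [->|hne].
  exists (fun i => if i == k.+1 then b else 0); split.
    split => [i hi|i hi]; first by case: eqP.
    case: eqP => [-> _ j hj|_ hb0]; last by move=> *; lia.
    by case: eqP => //; lia.
  rewrite NtS eqxx Nt_zero; first lia.
  by move=> i hi; case: eqP => //; lia.
have hw0 := w_gt0 hb (ltn0Sn k).
have hlt : N < b * w b k.+1 by move: hN; rewrite wS; lia.
have [t0 [hs0 hN0]] := IH (N %% w b k.+1) ltac:(by rewrite ltn_mod).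
have hq : N %/ w b k.+1 < b by rewrite ltn_divLR.
exists (fun i => if i == k.+1 then N %/ w b k.+1 else t0 i); split.
  case: hs0 => h1 h2; split => [i hi|i hi].
    by case: eqP => [_|hne']; [lia | apply: h1; lia].
  case: eqP => [_ hE|hne' hE j hj]; first by lia.
  have -> : (j == k.+1) = false by apply/eqP; lia.
  by apply: (h2 i) => //; lia.
rewrite NtS eqxx (@Nt_eq _ _ _ (t0)); last by move=> i hi; case: eqP => //; lia.
by rewrite hN0 addnC -divn_eq.
Qed.

Lemma MIN b k t : 0 < b -> skew b k t -> forall u, sumw b u = Nt b k t -> Tt k t <= size u.
Proof.
move=> hb; elim: k t => [|k IH] t hs u hu; first by rewrite Tt0.
move Etk: (t k.+1) => m; elim: m t hs u hu Etk => [|m IHm] t hs u hu htk.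
  rewrite TtS htk addn0; apply: IH; first exact: skew_le.
  by rewrite hu NtS htk mul0n addn0.
pose t' := fun i => if i == k.+1 then m else t i.
have hs' : skew b k.+1 t'.
  case: hs => h1 h2; split => [i hi|i hi].
    rewrite /t' /=; case: eqP => [_|_]; last by apply: h1.
    by have := h1 k.+1 ltac:(lia); lia.
  rewrite /t' /=; case: eqP => [_|hne hE j hj].
    by have := h1 k.+1 ltac:(lia); lia.
  have -> : (j == k.+1) = false by apply/eqP; lia.
  by apply: (h2 i) => //; lia.
have hT : Tt k.+1 t = Tt k.+1 t' + 1.
  rewrite !TtS htk /t' eqxx (@Tt_eq _ _ (t)); first by lia.
  by move=> i hi; case: eqP => //; lia.
have hN : Nt b k.+1 t = Nt b k.+1 t' + w b k.+1.
  rewrite !NtS htk /t' eqxx (@Nt_eq _ _ _ (t)); first by lia.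
  by move=> i hi; case: eqP => //; lia.
have hbd := skew_bound hb hs.
have hpos : forall j, j \in u -> j < k.+2.
  move=> j hj; apply: (w_lt_inv hb); apply: leq_ltn_trans hbd.
  by rewrite -hu; apply: sumw_mem.
case: (boolP (k.+1 \in u)) => hin.
  have hu' : sumw b (rem k.+1 u) = Nt b k.+1 t'.
    by move: hu; rewrite (sumw_rem b hin) hN; lia.
  have := IHm t' hs' (rem k.+1 u) hu' ltac:(by rewrite /t' eqxx).
  rewrite size_rem // hT.
  by case: (u) hin => //= ? ? _; lia.
have hall : all (fun j => j < k.+1) u.
  apply/allP => j hj; have := hpos j hj; rewrite ltnS leq_eqVlt => /orP[/eqP E|//].
  by move: hin; rewrite -E hj.
have hge : w b k.+1 <= sumw b u by rewrite hu hN; lia.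
have [u' [_ hu' hsz]] := C_lem hb (ltn0Sn k) hall hge.
have := IHm t' hs' u' ltac:(lia) ltac:(by rewrite /t' eqxx).
by rewrite hT; lia.
Qed.


Lemma Nt_one b k t : (forall i, 2 <= i <= k.+1 -> t i = 0) -> Nt b k.+1 t = t 1.
Proof.
elim: k => [|k IH] h; first by rewrite NtS Nt0 /= muln0 add0n muln1.
rewrite NtS IH; last by move=> i hi; apply: h; lia.
by rewrite (h k.+2) ?mul0n ?addn0 //; apply/andP; split.
Qed.

Lemma s0_id b n : 0 < b -> (b + 1) * b ^ (n + 0) + 1 = (b - 1) * (w b n.+1 + w b n) + 3.
Proof.
move=> hb; have h1 := w_pow n.+1 hb; have h2 := w_pow n hb.
rewrite addn0; rewrite expnS in h1; nia.
Qed.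

Lemma sgen_w b n i : 0 < b -> sgen b n i = sgen b n 0 + (b + 1) * b ^ n * (b - 1) * w b i.
Proof.
move=> hb; rewrite /sgen addn0 expnD -(w_pow i hb); nia.
Qed.

Lemma R_lt b m t : 2 <= b -> inR b m.+2 t -> Nt b m.+3 t < sgen b m.+2 0.
Proof.
move=> hb [h1 [h2 [h3 [h4 h5]]]].
have hs : skew b m.+3 t by split.
have hb1 : 0 < b by lia.
rewrite /sgen s0_id //.
case: b hb h1 h2 h3 h4 h5 hs hb1 => [|[|b]] // _ h1 h2 h3 h4 h5 hs hb1.
rewrite !subSS !subn0 in h3 h4 h5 *.
rewrite NtS.
case: (ltnP (t m.+3) b.+1) => ht3.
  have hb2 := skew_bound hb1 (skew_le hs).
  have : t m.+3 <= b by lia.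
  move=> /(leq_mul (leqnn (w b.+2 m.+3))); nia.
have e3 : t m.+3 = b.+1 by lia.
have := h4 e3 => h4'.
rewrite NtS e3.
case: (ltnP (t m.+2) b.+1) => ht2.
  have hb2 := skew_bound hb1 (skew_le (skew_le hs)).
  have : t m.+2 <= b by lia.
  move=> /(leq_mul (leqnn (w b.+2 m.+2))); nia.
have e2 : t m.+2 = b.+1 by lia.
have [h51 h52] := h5 e2 e3.
rewrite Nt_one; last by move=> i hi; apply: h52; lia.
rewrite e2; lia.
Qed.

Lemma R_surj b m N : 2 <= b -> N < sgen b m.+2 0 -> exists t, inR b m.+2 t /\ Nt b m.+3 t = N.
Proof.
move=> hb hN; have hb1 : 0 < b by lia.
rewrite /sgen s0_id // in hN.
case: b hb hb1 hN => [|[|b]] // _ hb1 hN.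
rewrite !subSS !subn0 /inR !subSS !subn0 in hN *.
have w3 := wS b.+2 m.+2; have w2 := wS b.+2 m.+1.
case: (ltnP N (b.+1 * w b.+2 m.+3)) => hN1.
  have hNw : N < w b.+2 m.+4 by rewrite wS; nia.
  have [t [hs ht]] := skew_exists hb1 hNw.
  have htk : t m.+3 <= b.
    move: ht; rewrite NtS => ht; rewrite leqNgt; apply/negP => hc.
    have := leq_mul (leqnn (w b.+2 m.+3)) hc; nia.
  exists t; split; last by [].
  case: hs => h1 h2; split => //; split => //.
  split; first by lia.
  split; by move=> *; lia.
case: (ltnP N (b.+1 * w b.+2 m.+3 + b.+1 * w b.+2 m.+2)) => hN2.
  have hNw : N - b.+1 * w b.+2 m.+3 < w b.+2 m.+3 by nia.
  have [t0 [hs ht]] := skew_exists hb1 hNw.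
  have htk : t0 m.+2 <= b.
    move: ht; rewrite NtS => ht; rewrite leqNgt; apply/negP => hc.
    have := leq_mul (leqnn (w b.+2 m.+2)) hc; nia.
  exists (fun i => if i == m.+3 then b.+1 else t0 i); split; last first.
    rewrite NtS eqxx (@Nt_eq _ _ _ t0); first by lia.
    by move=> i hi; case: eqP => //; lia.
  case: hs => h1 h2.
  split.
    move=> i hi; case: eqP => [_|hne]; first by lia.
    by apply: h1; lia.
  split.
    move=> i hi; case: eqP => [_|hne]; first by lia.
    move=> hE j hj; have -> : (j == m.+3) = false by apply/eqP; lia.
    by apply: (h2 i) => //; lia.
  rewrite eqxx (ltn_eqF (ltnSn m.+2)); split; first by [].
  split; first by move=> _; lia.
  by move=> hE; lia.
have hr : N - (b.+1 * w b.+2 m.+3 + b.+1 * w b.+2 m.+2) <= 2 by lia.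
exists (fun i => if i == m.+3 then b.+1 else if i == m.+2 then b.+1 else
          if i == 1 then N - (b.+1 * w b.+2 m.+3 + b.+1 * w b.+2 m.+2) else 0).
split; last first.
  rewrite NtS NtS Nt_one; last first.
    move=> i hi; case: eqP => [|_]; first by lia.
    case: eqP => [|_]; first by lia.
    by case: eqP => [|_]; first by lia.
  rewrite !eqxx (ltn_eqF (ltnSn m.+2)) (_ : (1 == m.+2) = false) //.
  rewrite (_ : (1 == m.+3) = false) //; lia.
split.
  move=> i hi; case: eqP => [_|_]; first lia.
  case: eqP => [_|_]; first lia.
  case: eqP => [_|_]; lia.
split.
  move=> i hi; do 2 (case: eqP => [_|_]; first by lia).
  case: eqP => [-> _ j hj|_ hE]; first by lia.
  by move=> *; lia.
rewrite eqxx; split; first by [].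
split; first by move=> _; rewrite (ltn_eqF (ltnSn m.+2)) eqxx.
move=> _ _; split.
  by rewrite (_ : (1 == m.+3) = false) // (_ : (1 == m.+2) = false) // eqxx.
move=> i hi h1 h2 h3; rewrite (negbTE h1) (negbTE h2) (negbTE h3) //.
Qed.

Lemma R_skew b n t : inR b n t -> skew b n.+1 t.
Proof. by case=> h1 [h2 _]; split. Qed.


Lemma mod_cancel s e a c : coprime s e -> a < s -> c < s -> (e * a) %% s = (e * c) %% s -> a = c.
Proof.
move=> hc.
wlog hac : a c / a <= c.
  move=> H ha hc' hm; case: (leqP a c) => h; first exact: H.
  by apply/esym; apply: H => //; lia.
move=> ha hc' /eqP hm.
have : (e * c == e * a %[mod s]) by rewrite eq_sym.
rewrite eqn_mod_dvd; last by apply: leq_mul.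
rewrite -mulnBr Gauss_dvdr // => hd.
case: (posnP (c - a)) => h; first by lia.
by have := dvdn_leq h hd; lia.
Qed.

Lemma list_sum (f a : nat -> nat) N : exists u, \sum_(i < N) a i * f i = sumn (map f u).
Proof.
elim: N => [|N [u IH]]; first by exists [::]; rewrite big_ord0.
exists (u ++ nseq (a N) N).
by rewrite big_ord_recr /= IH map_cat sumn_cat map_nseq sumn_nseq mulnC.
Qed.

Lemma coprime_s0 b n : 2 <= b -> b %% 3 != 1 ->
  coprime (sgen b n 0) ((b + 1) * b ^ n * (b - 1)).
Proof.
move=> hb hb3; rewrite coprimeMr; apply/andP; split.
  by rewrite /sgen addn0 addn1 coprime_sym coprimenS.
rewrite /sgen s0_id; last by lia.
rewrite coprime_sym /coprime mulnC gcdnMDl.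
have : coprime (b - 1) 3.
  rewrite coprime_sym prime_coprime //; apply/negP => /dvdnP [k hk].
  move/negP: hb3; apply; apply/eqP; rewrite -(subnK (_ : 1 <= b)); last by lia.
  by rewrite hk -modnDm modnMl.
by [].
Qed.


Unset Implicit Arguments.

Theorem mainTheorem12 (b n : nat) (hb : 2 <= b) (hb3 : b %% 3 != 1) (hn : 2 <= n) :
  forall x : nat,
    inApery (inT b n) (sgen b n 0) x <->
    exists t : nat -> nat, inR b n t /\ x = \sum_(1 <= i < n.+2) t i * sgen b n i.
Proof.
case: n hn => [|[|m]] // _.
have hb1 : 0 < b by lia.
have Hcop := coprime_s0 m.+2 hb hb3.
move: Hcop.
set s0 := sgen b m.+2 0.
set e := (b + 1) * b ^ m.+2 * (b - 1).
move=> Hcop.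
have Hsg : forall i, sgen b m.+2 i = s0 + e * w b i.
  by move=> i; rewrite /s0 /e (sgen_w _ _ hb1) mulnA.
have Hsgen : forall u, sumn (map (sgen b m.+2) u) = s0 * size u + e * sumw b u.
  elim=> [|y u IH]; first by rewrite /= !muln0.
  by rewrite /= IH Hsg sumw_cons; lia.
have Hsum : forall t, \sum_(1 <= i < m.+4) t i * sgen b m.+2 i = s0 * Tt m.+3 t + e * Nt b m.+3 t.
  move=> t; rewrite /Tt /Nt big_distrr big_distrr /= -big_split /=.
  by apply: eq_bigr => i _; rewrite Hsg; lia.
have Hs0pos : 0 < s0 by rewrite /s0 /sgen; lia.
have He : s0 <= e.+1.
  rewrite /s0 /e /sgen addn0.
  have : 1 <= b - 1 by lia.
  move=> /(leq_mul (leqnn ((b + 1) * b ^ m.+2))); rewrite muln1; lia.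
have HinT : forall k t, inT b m.+2 (k * s0 + \sum_(1 <= i < m.+4) t i * sgen b m.+2 i).
  move=> k t; exists m.+4, (fun i => if i == 0 then k else t i).
  rewrite -(@big_mkord nat 0 addn m.+4 xpredT (fun i => (if i == 0 then k else t i) * sgen b m.+2 i)).
  rewrite [RHS]big_ltn //=; congr (_ + _).
  by apply: eq_big_nat => i hi; case: eqP => //; lia.
have HS : forall y, inT b m.+2 y -> exists u, y = s0 * size u + e * sumw b u.
  move=> y [N [a ->]]; have [u ->] := list_sum (sgen b m.+2) a N.
  by exists u; rewrite Hsgen.
move=> x; split.
- case=> xS nS.
  have [u Ex] := HS x xS.
  set W := sumw b u in Ex; set U := size u in Ex.
  have [t [tR tN]] := R_surj hb (ltn_pmod W Hs0pos).
  have hT : Tt m.+3 t <= U + e * (W %/ s0).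
    case: (posnP (W %/ s0)) => hq.
      rewrite hq muln0 addn0; apply: (MIN hb1 (R_skew tR)).
      rewrite tN modn_small //.
      by rewrite (divn_eq W s0) hq mul0n add0n ltn_pmod.
    have := @TtN b m.+3 t hb1; rewrite tN.
    have := ltn_pmod W Hs0pos.
    have := leq_mul (leqnn e) hq; lia.
  exists t; split => //.
  rewrite Hsum tN.
  have Ex' : x = s0 * (U + e * (W %/ s0)) + e * (W %% s0).
    by rewrite Ex {1}(divn_eq W s0); lia.
  case: (posnP (U + e * (W %/ s0) - Tt m.+3 t)) => hk.
    by rewrite Ex'; congr (_ * _ + _); lia.
  exfalso; apply: nS; split.
    rewrite Ex'; have := leq_mul (leqnn s0) hk; lia.
  have -> : x - s0 = (U + e * (W %/ s0) - Tt m.+3 t - 1) * s0 +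
                      \sum_(1 <= i < m.+4) t i * sgen b m.+2 i.
    rewrite Hsum tN Ex'.
    move: hk hT; move: (U + e * (W %/ s0)) => K; move: (Tt m.+3 t) => T hk hT.
    have [d ->] : exists d, K = T + d.+1 by exists (K - T).-1; lia.
    rewrite (_ : T + d.+1 - T - 1 = d); last by lia.
    rewrite mulnDr mulnS; lia.
  exact: HinT.
- case=> t [tR ->]; split.
    by have := HinT 0 t; rewrite mul0n add0n.
  case=> hle hS.
  have [u hu] := HS _ hS.
  move: hle hu; rewrite Hsum => hle hu.
  set W := sumw b u in hu; set U := size u in hu.
  set T := Tt m.+3 t in hle hu; set N := Nt b m.+3 t in hle hu.
  have hN : N < s0 by exact: R_lt.
  have hTN : T <= N by exact: TtN.
  have E1 : s0 * T + e * N = s0 * (U + 1 + e * (W %/ s0)) + e * (W %% s0).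
    have := divn_eq W s0; lia.
  have hNr : N = W %% s0.
    apply: (mod_cancel Hcop hN (ltn_pmod W Hs0pos)).
    have := congr1 (modn^~ s0) E1.
    by rewrite ![s0 * _]mulnC !modnMDl.
  have E2 : T = U + 1 + e * (W %/ s0).
    apply/eqP; rewrite -(eqn_pmul2l Hs0pos); apply/eqP.
    move: E1; rewrite -hNr; lia.
  case: (posnP (W %/ s0)) => hq.
    have hWN : W = N.
      by rewrite hNr modn_small // (divn_eq W s0) hq mul0n add0n ltn_pmod.
    have := MIN hb1 (R_skew tR) (hWN : sumw b u = Nt b m.+3 t).
    rewrite -/T -/U; lia.
  have := leq_mul (leqnn e) hq; lia.
Qed.
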